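(* Let $(X,\leq)$ be a poset and $\mathbb{F}_2$ the field with two elements. If the group of units $\mathcal{U}(FI(X,\mathbb{F}_2))$ is solvable, then its derived length is ${\rm dl}(\mathcal{U}(FI(X,\mathbb{F}_2)))=\lceil\log_2(l(X)+1)\rceil$.
   Context: $FI(X,K)$ is the finitary incidence algebra: the $K$-vector space of formal sums $\alpha=\sum_{x\leq y}\alpha_{xy}e_{xy}$ ($x,y\in X$, $\alpha_{xy}\in K$) such that for every pair $x<y$ only finitely many $x\leq u<v\leq y$ have $\alpha_{uv}\neq0$, with convolution product $\alpha\beta=\sum_{x\leq y}\big(\sum_{x\leq z\leq y}\alpha_{xz}\beta_{zy}\big)e_{xy}$. The length $l(X)$ is the supremum of $|C|-1$ over finite chains $C\subseteq X$. ${\rm dl}$ denotes derived length of a solvable group; $\lceil t\rceil$ is the ceiling. *)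

(* Defs.v *)
From HB Require Import structures.
From mathcomp Require Import all_boot all_order all_algebra.
From mathcomp Require Import boolp classical_sets cardinality fsbigop.
Set Implicit Arguments. Unset Strict Implicit. Unset Printing Implicit Defensive.
Import Order.TTheory GRing.Theory.
Local Open Scope classical_set_scope.
Local Open Scope ring_scope.

Section FI.
Variables (d : Order.disp_t) (X : porderType d).

(* formal sums  alpha = sum_{x<=y} alpha_xy e_xy  over F_2, as coefficient functions *)
Definition FIel := X -> X -> 'F_2.

Definition inFI (a : FIel) : Prop :=
  (forall x y, a x y != 0 -> (x <= y)%O) /\
  (forall x y, (x < y)%O ->
     finite_set [set p : X * X | [/\ (x <= p.1)%O, (p.1 < p.2)%O, (p.2 <= y)%O
                                   & a p.1 p.2 != 0]]).

Definition FImul (a b : FIel) : FIel := fun x y =>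
  if (x <= y)%O then \sum_(z \in [set z : X | (x <= z)%O && (z <= y)%O]) (a x z * b z y)
  else 0.

Definition FIone : FIel := fun x y => (x == y)%:R.

Definition FIunits : set FIel :=
  [set a | inFI a /\ exists b, inFI b /\ FImul a b = FIone /\ FImul b a = FIone].

Definition FIcomms (H : set FIel) : set FIel :=
  [set c | exists a b a' b', H a /\ H b /\ inFI a' /\ inFI b' /\
       FImul a a' = FIone /\ FImul a' a = FIone /\
       FImul b b' = FIone /\ FImul b' b = FIone /\
       c = FImul (FImul (FImul a' b') a) b].

Definition FIgen (G : set FIel) : set FIel :=
  [set g | forall S : set FIel,
      S FIone -> G `<=` S ->
      (forall u v, S u -> S v -> S (FImul u v)) ->
      (forall u v, S u -> inFI v -> FImul u v = FIone -> FImul v u = FIone -> S v) ->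
      S g].

Definition FIderived (H : set FIel) : set FIel := FIgen (FIcomms H).

Fixpoint FIdser (n : nat) : set FIel :=
  match n with 0 => FIunits | n.+1 => FIderived (FIdser n) end.

Definition FIunits_solvable : Prop := exists n, FIdser n = [set FIone].

Definition FIunits_dl_is (k : nat) : Prop :=
  FIdser k = [set FIone] /\ forall m, (m < k)%N -> FIdser m <> [set FIone].

End FI.

Definition is_chain (d : Order.disp_t) (X : porderType d) (s : seq X) : Prop :=
  uniq s /\ forall x y, x \in s -> y \in s -> (x <= y)%O || (y <= x)%O.

(* l(X) = l : the supremum of |C|-1 over finite chains C is the natural number l
   (|C|-1 truncated at 0, so l(empty poset) = 0) *)
Definition poset_length_is (d : Order.disp_t) (X : porderType d) (l : nat) : Prop :=
  (exists s : seq X, is_chain s /\ (size s).-1 = l) /\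
  (forall s : seq X, is_chain s -> ((size s).-1 <= l)%N).

(* Main.v *)
Require Import Defs.
From mathcomp Require Import all_boot all_order all_algebra.
From mathcomp Require Import boolp classical_sets cardinality fsbigop.
From mathcomp Require Import ring.
Import Order.TTheory GRing.Theory.

Definition P {d} {X : porderType d} (n : nat) (x y : X) : Prop :=
  exists s : seq X, [/\ size s = n, path <%O x s & last x s = y].

Lemma P_mono {d} {X : porderType d} n (x z y : X) :
  (0 < n)%N -> P n x z -> (z <= y)%O -> P n x y.
Proof.
move=> n0 [s [sz ps ls]] zy; case/lastP: s sz ps ls => [|s' w]; first by move=> sz; rewrite -sz in n0.
rewrite size_rcons rcons_path last_rcons => sz /andP[ps' lw] Ew; subst w.
exists (rcons s' y); rewrite size_rcons rcons_path last_rcons ps' /=; split => //.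
exact: lt_le_trans lw zy.
Qed.

Lemma P_cat {d} {X : porderType d} n m (x z y : X) :
  P n x z -> P m z y -> P (n + m) x y.
Proof.
move=> [s1 [sz1 p1 l1]] [s2 [sz2 p2 l2]]; exists (s1 ++ s2).
by rewrite size_cat cat_path last_cat l1 p1 p2 sz1 sz2.
Qed.

Lemma P_split {d} {X : porderType d} n m (x y : X) :
  P (n + m) x y -> exists z, P n x z /\ P m z y.
Proof.
move=> [s [sz ps ls]]; exists (last x (take n s)); split.
  exists (take n s); split => //; last exact: take_path.
  by rewrite size_take sz; case: ltnP => // h; apply/eqP; rewrite eqn_leq h /= leq_addr.
exists (drop n s); rewrite size_drop sz addKn; split => //.
  by move: ps; rewrite -{1}(cat_take_drop n s) cat_path => /andP[].
by rewrite -last_cat cat_take_drop.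
Qed.

Lemma P_lt {d} {X : porderType d} n (x y : X) : (0 < n)%N -> P n x y -> (x < y)%O.
Proof.
move=> n0 [s [sz ps ls]]; case/lastP: s sz ps ls => [|s' w]; first by move=> sz; rewrite -sz in n0.
move=> _ ps; rewrite last_rcons => Ew; subst w.
have := order_path_min lt_trans ps => /allP; apply; by rewrite mem_rcons inE eqxx.
Qed.

Lemma P_1 {d} {X : porderType d} (x y : X) : (x < y)%O -> P 1 x y.
Proof. by move=> xy; exists [:: y]; rewrite /= xy. Qed.

Lemma P_chain {d} {X : porderType d} n (x y : X) : P n x y ->
  exists s : seq X, is_chain s /\ size s = n.+1.
Proof.
move=> [s [sz ps _]]; exists (x :: s); split; last by rewrite /= sz.
have so : sorted <%O (x :: s) by [].
split; first exact: lt_sorted_uniq.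
move=> a b ain bin.
have sle : sorted <=%O (x :: s) by case/andP: (lt_sorted_is_uniq_le so).
case: (leqP (index a (x :: s)) (index b (x :: s))) => h.
  by rewrite (sorted_leq_index le_trans lexx sle a b ain bin h).
by rewrite (sorted_leq_index le_trans lexx sle b a bin ain (ltnW h)) orbT.
Qed.

Lemma chain_P {d} {X : porderType d} (s : seq X) k : is_chain s -> (0 < k)%N ->
  (k <= (size s).-1)%N -> exists x y : X, P k x y.
Proof.
move=> [us cs] k0 kl.
have tot : {in s &, total <=%O} by move=> a b ain bin; exact: cs.
have st := sort_sorted_in tot (allss s).
have ut : uniq (sort <=%O s) by rewrite sort_uniq.
have slt : sorted <%O (sort <=%O s) by rewrite lt_sorted_uniq_le ut st.
have szt : size (sort <=%O s) = size s by rewrite size_sort.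
move: slt szt; case: (sort <=%O s) => [|c t] /=.
  by move=> _ sz; move: kl; rewrite -sz /= leqn0 => /eqP kk; rewrite kk in k0.
move=> pt szt; exists c, (last c (take k t)); exists (take k t); split => //.
  by rewrite size_take; case: ltnP => // h; apply/eqP; rewrite eqn_leq h; rewrite -szt /= in kl.
exact: take_path.
Qed.
Arguments P_mono {d X n x z y}.
Arguments P_cat {d X n m x z y}.
Arguments P_split {d X n m x y}.
Arguments P_lt {d X n x y}.
Arguments P_chain {d X n x y}.
Arguments chain_P {d X s k}.

Local Open Scope classical_set_scope.
Local Open Scope ring_scope.

Lemma F2nz (c : 'F_2) : c != 0 -> c = 1.
Proof. by case: c => [[|[|//]]] //= Hc _; apply/val_inj. Qed.
Lemma F2dbl (c : 'F_2) : c + c = 0.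
Proof. by case: c => [[|[|//]]] //= Hc; apply/val_inj. Qed.

Lemma FIext {d} {X : porderType d} (a b : FIel X) :
  (forall x y, a x y = b x y) -> a = b.
Proof.
move=> H; have E : forall x, a x = b x by move=> x; apply/funext => y; exact: H.
exact: (funext E).
Qed.

Definition Iv {d} {X : porderType d} (x y : X) : set X :=
  [set z : X | (x <= z)%O && (z <= y)%O].

Lemma FImulE {d} {X : porderType d} (a b : FIel X) x y :
  FImul a b x y = if (x <= y)%O then \sum_(z \in Iv x y) (a x z * b z y) else 0.
Proof. by []. Qed.

Lemma sum1 {d} {X : porderType d} (x y w : X) (F : X -> 'F_2) :
  Iv x y w -> (forall z, Iv x y z -> z != w -> F z = 0) ->
  \sum_(z \in Iv x y) F z = F w.
Proof.
move=> Hw H; rewrite -(fsbig_widen [set w]) ?fsbig_set1 //.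
  by move=> z ->.
by move=> z [Hz /= Hzw]; apply: H => //; apply/eqP.
Qed.

Lemma sum2 {d} {X : porderType d} (x y w1 w2 : X) (F : X -> 'F_2) :
  w1 != w2 -> Iv x y w1 -> Iv x y w2 ->
  (forall z, Iv x y z -> z != w1 -> z != w2 -> F z = 0) ->
  \sum_(z \in Iv x y) F z = F w1 + F w2.
Proof.
move=> Hne Hw1 Hw2 H; rewrite -(fsbig_widen ([set w1] `|` [set w2])).
- rewrite fsbigU0 ?fsbig_set1 //; try exact: finite_set1.
  by move=> z [/= -> Hz]; move: Hne; rewrite Hz eqxx.
- by move=> z [->|->].
- move=> z [Hz /= Hn]; apply: H => //; apply/eqP => E; apply: Hn; by [left|right].
Qed.

Definition lsupp {d} {X : porderType d} (u : FIel X) :=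
  forall x y, u x y != 0 -> (x <= y)%O.

Lemma lsupp_mul {d} {X : porderType d} (u v : FIel X) : lsupp (FImul u v).
Proof. by move=> x y; rewrite FImulE; case: ifP => // _; rewrite eqxx. Qed.

Definition T {d} {X : porderType d} (p q : X) : FIel X :=
  fun a b => (a == b)%:R + ((a == p) && (b == q))%:R.

Lemma lsuppT {d} {X : porderType d} (p q : X) : (p < q)%O -> lsupp (T p q).
Proof.
move=> pq a b; rewrite /T; case: (a =P b) => [->|_]; first by rewrite lexx.
rewrite add0r; case: (a =P p) => [->|_]; case: (b =P q) => [->|_] //= _; exact: ltW.
Qed.

Lemma mulT {d} {X : porderType d} (u : FIel X) p q : lsupp u -> (p < q)%O ->
  FImul u (T p q) = fun x y => u x y + (y == q)%:R * u x p.
Proof.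
move=> Hu pq; apply/funext => x; apply/funext => y; rewrite FImulE.
have pnq : p != q by rewrite lt_neqAle in pq; case/andP: pq.
case: ifP => xy.
- case: (y =P q) => [Ey|Ey].
  + subst y. case: (boolP (x <= p)%O) => xp.
    * rewrite (@sum2 _ _ x q q p) //.
      -- have qnp : q != p by rewrite eq_sym.
         by rewrite /T !eqxx (negbTE qnp) (negbTE pnq) /= addr0 add0r !mulr1 mul1r.
      -- by rewrite eq_sym.
      -- by rewrite /Iv /= xy lexx.
      -- by rewrite /Iv /= xp ltW.
      -- move=> z _ h1 h2; by rewrite /T (negbTE h1) (negbTE h2) addr0 mulr0.
    * rewrite (@sum1 _ _ x q q) //.
      -- have -> : u x p = 0 by apply/eqP; apply: contraNT xp; apply: Hu.
         by rewrite /T eqxx andbT eq_sym (negbTE pnq) addr0 mulr1 mulr0 addr0.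
      -- by rewrite /Iv /= xy lexx.
      -- move=> z Hz h1; rewrite /T (negbTE h1) add0r.
         case: (z =P p) => [Ez|_]; last by rewrite mulr0.
         by subst z; move: Hz; rewrite /Iv /= (negbTE xp).
  + rewrite (@sum1 _ _ x y y) //.
    * by rewrite /T eqxx; move/eqP/negbTE: Ey => ->; rewrite !andbF addr0 mulr1 mul0r addr0.
    * by rewrite /Iv /= xy lexx.
    * move=> z _ h1; rewrite /T (negbTE h1); move/eqP/negbTE: Ey => ->.
      by rewrite andbF addr0 mulr0.
- have -> : u x y = 0 by apply/eqP; apply: contraFT xy; apply: Hu.
  case: (y =P q) => [Ey|_]; last by rewrite mul0r addr0.
  subst y; have -> : u x p = 0; last by rewrite mulr0 addr0.
  apply/eqP; apply: contraFT xy => /Hu xp; exact: le_trans xp (ltW pq).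
Qed.

Lemma mulu1 {d} {X : porderType d} (u : FIel X) : lsupp u -> FImul u (@FIone _ X) = u.
Proof.
move=> Hu; apply/funext => x; apply/funext => y; rewrite FImulE.
case: ifP => xy.
- rewrite (@sum1 _ _ x y y) //; first by rewrite /FIone eqxx mulr1.
  + by rewrite /Iv /= xy lexx.
  + by move=> z _ h; rewrite /FIone (negbTE h) mulr0.
- by apply/esym/eqP; apply: contraFT xy; apply: Hu.
Qed.

Lemma lsupp1 {d} {X : porderType d} : lsupp (@FIone d X).
Proof. by move=> x y; rewrite /FIone; case: (x =P y) => [->|]; rewrite ?lexx ?eqxx. Qed.

Lemma TT {d} {X : porderType d} (p q : X) : (p < q)%O -> FImul (T p q) (T p q) = @FIone _ X.
Proof.
move=> pq; rewrite mulT //; last exact: lsuppT.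
apply: FIext => x y.
have pnq : p != q by rewrite lt_neqAle in pq; case/andP: pq.
rewrite /T /FIone (negbTE pnq) andbF addr0.
case: (y =P q) => [->|_]; last by rewrite andbF mul0r !addr0.
by rewrite mul1r andbT -addrA F2dbl addr0.
Qed.


Lemma commT {d} {X : porderType d} (p r q : X) : (p < r)%O -> (r < q)%O ->
  FImul (FImul (FImul (T p r) (T r q)) (T p r)) (T r q) = T p q.
Proof.
move=> pr rq; have pq := lt_trans pr rq.
rewrite (mulT _ _ _ (lsupp_mul _ _) rq) (mulT _ _ _ (lsupp_mul _ _) pr) (mulT _ _ _ (lsuppT _ _ pr) rq).
have npr : p != r by rewrite lt_neqAle in pr; case/andP: pr.
have nrq : r != q by rewrite lt_neqAle in rq; case/andP: rq.
have npq : p != q by rewrite lt_neqAle in pq; case/andP: pq.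
have nrp : r != p by rewrite eq_sym.
have nqr : q != r by rewrite eq_sym.
have nqp : q != p by rewrite eq_sym.
apply: FIext => a b; rewrite /T.
rewrite !(eqxx, negbTE npr, negbTE nrq, negbTE npq, negbTE nrp, negbTE nqr, negbTE nqp) /=.
case: (a =P p) => [->|/eqP ap]; rewrite ?eqxx ?(negbTE ap) /=;
case: (b =P q) => [->|/eqP bq]; rewrite ?eqxx ?(negbTE bq) /=;
try (case: (b =P r) => [->|/eqP br]; rewrite ?eqxx ?(negbTE br) /=);
rewrite ?(eqxx, negbTE npr, negbTE nrq, negbTE npq, negbTE nrp, negbTE nqr, negbTE nqp) /=;
rewrite ?addr0 ?add0r ?mulr0 ?mul0r ?mulr1 ?mul1r ?addr0 ?add0r ?F2dbl //.
all: by rewrite ?addr0 // -addrA F2dbl addr0.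
Qed.


Definition V {d} {X : porderType d} (n : nat) (u : FIel X) : Prop :=
  (forall x, u x x = 1) /\ (forall x y, x != y -> u x y != 0 -> P n x y).

Lemma Iv_xx {d} {X : porderType d} (x z : X) : Iv x x z -> z = x.
Proof. by rewrite /Iv /= => /andP[h1 h2]; apply/eqP; rewrite eq_le h1 h2. Qed.

Lemma Iv_x {d} {X : porderType d} (x : X) : Iv x x x.
Proof. by rewrite /Iv /= lexx. Qed.

Lemma diag_mul {d} {X : porderType d} (u v : FIel X) x :
  FImul u v x x = u x x * v x x.
Proof.
rewrite FImulE lexx (@sum1 _ _ x x x) //; first exact: Iv_x.
by move=> z /Iv_xx ->; rewrite eqxx.
Qed.

Lemma V_one {d} {X : porderType d} n : V n (@FIone _ X).
Proof. by split => [x|x y /negbTE]; rewrite /FIone ?eqxx // => ->; rewrite eqxx. Qed.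

Lemma V_mul {d} {X : porderType d} n (u v : FIel X) : (0 < n)%N ->
  V n u -> V n v -> V n (FImul u v).
Proof.
move=> n0 [u1 u2] [v1 v2]; split => [x|x y xy]; first by rewrite diag_mul u1 v1 mulr1.
move=> H; case: (pselect (P n x y)) => // nP; exfalso; move: H.
rewrite FImulE; case: ifP => xyle; last by rewrite eqxx.
rewrite fsbig1 ?eqxx // => z /andP[xz zy].
case: (z =P x) => [->|/eqP zx].
  rewrite u1 mul1r; apply/eqP; apply: contraT => /(v2 _ _ xy) //.
have -> : u x z = 0; last by rewrite mul0r.
apply/eqP; apply: contraT => /(u2 x z); rewrite eq_sym => /(_ zx) pxz.
by case: nP; exact: (P_mono n0 pxz zy).
Qed.

Arguments V_mul {d X n u v}.

Lemma V_inv {d} {X : porderType d} n (u v : FIel X) : (0 < n)%N ->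
  V n u -> lsupp v -> FImul u v = @FIone _ X -> V n v.
Proof.
move=> n0 [u1 u2] lv uv; split => [x|x y xy vxy].
  by have := f_equal (fun f => f x x) uv; rewrite /= diag_mul u1 mul1r /FIone eqxx.
case: (pselect (P n x y)) => // nP; exfalso.
have := f_equal (fun f => f x y) uv; rewrite /= FImulE (lv _ _ vxy).
rewrite (@sum1 _ _ x y x).
- by rewrite u1 mul1r /FIone (negbTE xy) => E; rewrite E eqxx in vxy.
- by rewrite /Iv /= lexx (lv _ _ vxy).
- move=> z /andP[xz zy] zx; have -> : u x z = 0; last by rewrite mul0r.
  apply/eqP; apply: contraT => /(u2 x z); rewrite eq_sym => /(_ zx) pxz.
  by case: nP; exact: (P_mono n0 pxz zy).
Qed.

Lemma V_lin {d} {X : porderType d} n (u v : FIel X) (x y : X) : (0 < n)%N ->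
  V n u -> V n v -> x != y -> ~ P (n + n) x y -> FImul u v x y = u x y + v x y.
Proof.
move=> n0 [u1 u2] [v1 v2] xy nP; rewrite FImulE; case: ifP => xyle.
  rewrite (@sum2 _ _ x y x y) //.
  - by rewrite u1 v1 mul1r mulr1 addrC.
  - by rewrite /Iv /= lexx xyle.
  - by rewrite /Iv /= lexx xyle.
  - move=> z _ zx zy.
    case: (u x z =P 0) => [->|/eqP h1]; first by rewrite mul0r.
    case: (v z y =P 0) => [->|/eqP h2]; first by rewrite mulr0.
    have xz : x != z by rewrite eq_sym.
    by case: nP; exact: (P_cat (u2 _ _ xz h1) (v2 _ _ zy h2)).
have -> : u x y = 0.
  apply/eqP; apply: contraT => /(u2 _ _ xy) /(P_lt n0) /ltW; by rewrite xyle.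
have -> : v x y = 0.
  apply/eqP; apply: contraT => /(v2 _ _ xy) /(P_lt n0) /ltW; by rewrite xyle.
by rewrite addr0.
Qed.

Arguments V_lin {d X n u v x y}.

Lemma V_comm {d} {X : porderType d} n (a b a' b' : FIel X) : (0 < n)%N ->
  V n a -> V n b -> V n a' -> V n b' -> FImul a a' = @FIone _ X -> FImul b b' = @FIone _ X ->
  V (n + n) (FImul (FImul (FImul a' b') a) b).
Proof.
move=> n0 Va Vb Va' Vb' aa' bb'.
have Vc := V_mul n0 (V_mul n0 (V_mul n0 Va' Vb') Va) Vb.
split => [x|x y xy H]; first by case: Vc => ->.
case: (pselect (P (n + n) x y)) => // nP; exfalso; move: H.
rewrite (V_lin n0 (V_mul n0 (V_mul n0 Va' Vb') Va) Vb xy nP).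
rewrite (V_lin n0 (V_mul n0 Va' Vb') Va xy nP) (V_lin n0 Va' Vb' xy nP).
have ea := f_equal (fun f => f x y) aa'; have eb := f_equal (fun f => f x y) bb'.
rewrite /= (V_lin n0 Va Va' xy nP) /FIone (negbTE xy) in ea.
rewrite /= (V_lin n0 Vb Vb' xy nP) /FIone (negbTE xy) in eb.
have -> : a' x y + b' x y + a x y + b x y = (a x y + a' x y) + (b x y + b' x y) by ring.
by rewrite ea eb addr0 eqxx.
Qed.

Lemma V_triv {d} {X : porderType d} n (u : FIel X) :
  (forall x y : X, ~ P n x y) -> V n u -> u = @FIone _ X.
Proof.
move=> nP [u1 u2]; apply: FIext => x y; rewrite /FIone.
case: (x =P y) => [->|/eqP xy]; first by rewrite u1.
by apply/eqP; apply: contraT => /(u2 _ _ xy) /nP.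
Qed.


Lemma inFI1 {d} {X : porderType d} : inFI (@FIone _ X).
Proof.
split; first exact: lsupp1.
move=> x y _; apply: (@sub_finite_set _ _ set0); last exact: finite_set0.
move=> -[p1 p2] [/= _ h _]; rewrite /FIone.
by move: h; rewrite lt_neqAle => /andP[/negbTE -> _]; rewrite eqxx.
Qed.

Lemma inFIT {d} {X : porderType d} (p q : X) : (p < q)%O -> inFI (T p q).
Proof.
move=> pq; split; first exact: lsuppT.
move=> x y _; apply: (@sub_finite_set _ _ [set (p, q)]); last exact: finite_set1.
move=> -[p1 p2] [/= _ h _]; rewrite /T.
move: h; rewrite lt_neqAle => /andP[/negbTE -> _]; rewrite add0r.
by case: (p1 =P p) => [->|]; case: (p2 =P q) => [->|] //=; rewrite eqxx.
Qed.

Lemma one_dser {d} {X : porderType d} k : FIdser (X:=X) k (@FIone _ X).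
Proof.
case: k => [|k] /=; last by move=> S S1.
split; first exact: inFI1.
exists (@FIone _ X); rewrite mulu1; last exact: lsupp1.
by split => //; exact: inFI1.
Qed.

Lemma V_dser {d} {X : porderType d} k : FIdser (X:=X) k `<=` V (2 ^ k).
Proof.
elim: k => [|k IH] /=.
  move=> u [[lu _] [b [_ [ub _]]]]; split => [x|x y xy uxy].
    have := f_equal (fun f => f x x) ub; rewrite /= diag_mul /FIone eqxx => E.
    apply: F2nz; apply/eqP => E0; by move: E; rewrite E0 mul0r => /eqP; rewrite eq_sym oner_eq0.
  by apply: P_1; rewrite lt_neqAle xy (lu _ _ uxy).
have n0 : (0 < 2 ^ k)%N by rewrite expn_gt0.
have n20 : (0 < 2 ^ k + 2 ^ k)%N by rewrite addn_gt0 n0.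
rewrite expnS mul2n -addnn => u; apply.
- exact: V_one.
- move=> c [a [b [a' [b' [Ha [Hb [[la' _] [[lb' _] [aa' [_ [bb' [_ ->]]]]]]]]]]]].
  have Va := IH _ Ha; have Vb := IH _ Hb.
  apply: V_comm => //; [exact: (V_inv _ _ _ n0 Va la' aa')|exact: (V_inv _ _ _ n0 Vb lb' bb')].
- by move=> ? ? ? ?; apply: V_mul.
- by move=> ? v ? [lv _] ? _; apply: (V_inv _ _ _ n20) => //; eassumption.
Qed.

Lemma T_dser {d} {X : porderType d} m (x y : X) : P (2 ^ m) x y -> FIdser m (T x y).
Proof.
elim: m x y => [|m IH] x y /=.
  move=> /(P_lt (ltn0Sn 0)) xy; split; first exact: inFIT.
  by exists (T x y); rewrite TT //; split => //; exact: inFIT.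
rewrite expnS mul2n -addnn => /P_split [z [h1 h2]].
have n0 : (0 < 2 ^ m)%N by rewrite expn_gt0.
have xz := P_lt n0 h1; have zy := P_lt n0 h2.
move=> S _ SG _ _; apply: SG.
exists (T x z), (T z y), (T x z), (T z y).
do 4!(split; first by [exact: IH | exact: inFIT]).
by rewrite !TT // commT.
Qed.


Arguments T_dser {d X m x y}.
Arguments V_dser {d X k}.

Lemma T_neq1 {d} {X : porderType d} k (x y : X) : (0 < k)%N -> P k x y ->
  T x y <> @FIone _ X.
Proof.
move=> k0 pxy ET; have xy := P_lt k0 pxy.
have xny : x != y by rewrite lt_neqAle in xy; case/andP: xy.
have := f_equal (fun f => f x y) ET; rewrite /T /FIone /= (negbTE xny) !eqxx /=.
by move/eqP; rewrite GRing.add0r GRing.oner_eq0.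
Qed.

Arguments T_neq1 {d X k x y}.

Lemma dser_nontriv {d} {X : porderType d} m (s : seq X) : is_chain s ->
  (2 ^ m <= (size s).-1)%N -> FIdser m <> [set @FIone _ X].
Proof.
move=> cs h E; have n0 : (0 < 2 ^ m)%N by rewrite expn_gt0.
have [x [y pxy]] := chain_P cs n0 h.
have := T_dser pxy; rewrite E => /= ET.
exact: T_neq1 n0 pxy ET.
Qed.

Arguments dser_nontriv {d X m s}.

Local Close Scope ring_scope.
Local Close Scope classical_set_scope.

Theorem corollary1p8 (d : Order.disp_t) (X : porderType d) :
  FIunits_solvable X ->
  exists l : nat, poset_length_is X l /\ FIunits_dl_is X (up_log 2 l.+1).
Proof.
move=> [n Hn].
have bound : forall s : seq X, is_chain s -> ((size s).-1 < 2 ^ n)%N.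
  move=> s cs; rewrite ltnNge; apply/negP => h.
  exact: (dser_nontriv cs h Hn).
pose Pl := fun j => `[< exists s : seq X, is_chain s /\ (size s).-1 = j >].
have exP : exists j, Pl j.
  by exists 0%N; apply/asboolP; exists [::]; split => //; split.
have ubP : forall j, Pl j -> (j <= 2 ^ n)%N.
  move=> j /asboolP [s [cs <-]]; exact: ltnW (bound _ cs).
case: (ex_maxnP exP ubP) => l /asboolP [s [cs szs]] maxl.
have maxc : forall t : seq X, is_chain t -> ((size t).-1 <= l)%N.
  by move=> t ct; apply: maxl; apply/asboolP; exists t.
exists l; split; first by split; [exists s|].
set k := up_log 2 l.+1; split.
  apply/seteqP; split => u /=.
    move/V_dser => Vu; apply: (V_triv _ _ _ Vu) => x y pxy.
    have [t [ct szt]] := P_chain pxy.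
    have := maxc _ ct; rewrite szt /= => h.
    have := up_logP l.+1 (ltnSn 1); rewrite -/k => h2.
    by have := leq_trans h2 h; rewrite ltnn.
  by move=> ->; exact: one_dser.
move=> m mk.
have l0 : (1 < l.+1)%N.
  by rewrite ltnS lt0n; apply/negP => /eqP l0; move: mk; rewrite /k l0 up_log1.
have h1 := up_log_gtn (ltnSn 1) l0; rewrite -/k in h1.
apply: (dser_nontriv cs); rewrite szs -ltnS.
apply: leq_ltn_trans h1; apply: leq_pexp2l => //.
by rewrite -ltnS prednK // (leq_ltn_trans _ mk).
Qed.
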